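(* Let $d\ge2$ and let $\{U^{(a)}_j\}_{j=0}^{d^2-1}$, $a=0,\dots,d^2-2$, be a complete set of mutually unbiased unitary-operator bases for $\operatorname{End}(\mathbb{C}^d)$ (i.e. $d^2-1$ unitary operator bases, pairwise mutually unbiased). Then the collection of all $d^2(d^2-1)$ operators, taken as elements of $\operatorname{PU}(d)$ and each given weight $1/(d^2(d^2-1))$, forms a weighted unitary $2$-design; that is, $$\frac{1}{d^2(d^2-1)}\sum_{a=0}^{d^2-2}\sum_{j=0}^{d^2-1}U^{(a)}_j\otimes U^{(a)}_j\otimes U^{(a)\dagger}_j\otimes U^{(a)\dagger}_j=\int_{\operatorname{PU}(d)}d\mu(x)\,U(x)^{\otimes2}\otimes(U(x)^{\otimes2})^\dagger.$$
   Context: A unitary operator basis for $\operatorname{End}(\mathbb{C}^d)$ is a set $\{U_j\}_{j=0}^{d^2-1}\subset\operatorname{U}(d)$ with $\operatorname{tr}(U_j^\dagger U_k)=d\,\delta_{jk}$. Two unitary operator bases $\{U_j\}$, $\{V_k\}$ are mutually unbiased if $|\operatorname{tr}(U_j^\dagger V_k)|^2=1$ for all $j,k$. $\mu$ is the Haar probability measure on $\operatorname{PU}(d)=\operatorname{U}(d)/\operatorname{U}(1)$ and $U(x)$ a representative of $x$. *)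

(* Defs.v *)
From HB Require Import structures.
From mathcomp Require Import all_boot all_order all_algebra.
From mathcomp Require Import spectral.
Set Implicit Arguments. Unset Strict Implicit. Unset Printing Implicit Defensive.
Import Order.TTheory GRing.Theory Num.Theory.
Local Open Scope ring_scope.

Section Defs.
Variable C : numClosedFieldType.
Variable d : nat.

Definition adjmx (U : 'M[C]_d) : 'M[C]_d := (map_mx Num.conj U)^T.

Definition unitary_operator_basis (U : 'I_(d ^ 2) -> 'M[C]_d) : Prop :=
  (forall j, U j \is unitarymx) /\
  (forall j k, \tr (adjmx (U j) *m U k) = (d * (j == k))%:R).

Definition mutually_unbiased (U V : 'I_(d ^ 2) -> 'M[C]_d) : Prop :=
  forall j k, `|\tr (adjmx (U j) *m V k)| ^+ 2 = 1.

(* Multi-index for End((C^d)^{⊗4}). *)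
Definition idx4 := ('I_d * 'I_d * 'I_d * 'I_d)%type.

(* Entry ((i1,i2,i3,i4),(j1,j2,j3,j4)) of U ⊗ U ⊗ U^dag ⊗ U^dag
   (Kronecker convention (A⊗B)_{(i,k),(j,l)} = A_{ij} B_{kl}). *)
Definition tens22 (U : 'M[C]_d) (I J : idx4) : C :=
  let: (i1, i2, i3, i4) := I in
  let: (j1, j2, j3, j4) := J in
  U i1 j1 * U i2 j2 * adjmx U i3 j3 * adjmx U i4 j4.

(* Polynomial functions on U(d) spanned by the matrix entries of
   U^{⊗2} ⊗ (U^{⊗2})^dag, represented by a coefficient array c. *)
Definition polyfun (c : idx4 -> idx4 -> C) (U : 'M[C]_d) : C :=
  \sum_(I : idx4) \sum_(J : idx4) c I J * tens22 U I J.

(* The Haar integral (w.r.t. the Haar probability measure, on U(d) or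
   equivalently on PU(d), the integrands being phase invariant), restricted
   to this space of functions: a linear functional on functions (well defined,
   i.e. depending only on the function on U(d)), invariant under left
   translation by unitaries, and normalised (integral of 1 is 1). *)
Definition haar_integral (E : (idx4 -> idx4 -> C) -> C) : Prop :=
  (forall (a : C) c c', E (fun I J => a * c I J + c' I J) = a * E c + E c') /\
  (forall (V : 'M[C]_d) c c', V \is unitarymx ->
     (forall U : 'M[C]_d, U \is unitarymx -> polyfun c' U = polyfun c (V *m U)) ->
     E c' = E c) /\
  (forall c, (forall U : 'M[C]_d, U \is unitarymx -> polyfun c U = 1) -> E c = 1).

Definition entry_coef (I J : idx4) : idx4 -> idx4 -> C :=
  fun I' J' => ((I' == I) && (J' == J))%:R.

End Defs.

(* Main.v *)
Require Import Defs.
From HB Require Import structures.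
From mathcomp Require Import all_boot all_order all_algebra.
From mathcomp Require Import spectral.
Import Order.TTheory GRing.Theory Num.Theory.
Local Open Scope ring_scope.

Section S.
Variable (C : numClosedFieldType) (d : nat).
Hypothesis hd : (2 <= d)%N.
Local Notation idx := (idx4 d).

Lemma sum_pair (A B : finType) (F : A * B -> C) :
  \sum_(p : A * B) F p = \sum_(a : A) \sum_(b : B) F (a, b).
Proof. by rewrite pair_big; apply: eq_bigr => -[]. Qed.

Lemma sum4 (F : idx -> C) :
  \sum_(I : idx) F I = \sum_i1 \sum_i2 \sum_i3 \sum_i4 F (i1, i2, i3, i4).
Proof. by rewrite !sum_pair. Qed.

Lemma sum8 (F : idx -> idx -> C) :
  \sum_(I : idx) \sum_(J : idx) F I J =
  \sum_i1 \sum_j1 \sum_i2 \sum_j2 \sum_i3 \sum_j3 \sum_i4 \sum_j4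
     F (i1, i2, i3, i4) (j1, j2, j3, j4).
Proof.
rewrite sum4; apply: eq_bigr => i1 _.
under eq_bigr => i2 _ do under eq_bigr => i3 _ do under eq_bigr => i4 _ do rewrite sum4.
under eq_bigr => i2 _ do under eq_bigr => i3 _ do
  (rewrite exchange_big; under eq_bigr => j1 _ do
     (rewrite exchange_big; under eq_bigr => j2 _ do rewrite exchange_big)).
under eq_bigr => i2 _ do (rewrite exchange_big; under eq_bigr => j1 _ do rewrite exchange_big).
by rewrite exchange_big.
Qed.
Lemma row_id {x : 'M[C]_d} (hx : x \is unitarymx) i k :
  \sum_j x i j * (x k j)^* = (i == k)%:R.
Proof.
move/unitarymxP/matrixP: hx => /(_ i k); rewrite !mxE.
by under eq_bigr do rewrite !mxE.
Qed.

Lemma col_id {x : 'M[C]_d} (hx : x \is unitarymx) i k :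
  \sum_j (x j i)^* * x j k = (i == k)%:R.
Proof.
rewrite -trmxC_unitary in hx; rewrite -(row_id hx).
by apply: eq_bigr => j _; rewrite !mxE conjCK.
Qed.

Lemma adjE (x : 'M[C]_d) i j : adjmx x i j = (x j i)^*.
Proof. by rewrite /adjmx !mxE. Qed.

Definition dl (a b : 'I_d) : C := (a == b)%:R.
Lemma dl_ne a j : j != a -> dl a j = 0.
Proof. by rewrite /dl eq_sym => /negbTE ->. Qed.
Lemma dl_ne' a j : j != a -> dl j a = 0.
Proof. by rewrite /dl => /negbTE ->. Qed.
Lemma dl_refl a : dl a a = 1.
Proof. by rewrite /dl eqxx. Qed.

Lemma sum_delta (a : 'I_d) (G : 'I_d -> C) :
  (forall j, j != a -> G j = 0) -> \sum_j G j = G a.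
Proof. by move=> H; rewrite (bigD1 a) //= big1 ?addr0 // => j /H. Qed.

Ltac zap := let j := fresh "j" in let hj := fresh "hj" in
  move=> j hj; rewrite ?(dl_ne hj) ?(dl_ne' hj) ?(mulr0, mul0r).

Lemma sum_dlr (a : 'I_d) (G : 'I_d -> C) : \sum_j G j * dl a j = G a.
Proof. by rewrite (sum_delta a) ?dl_refl ?mulr1 // => j /dl_ne ->; rewrite mulr0. Qed.

Lemma perm4 (T a b c e : C) : T * ((a * b) * (c * e)) = T * c * a * e * b.
Proof.
rewrite -!mulrA; congr (_ * _).
by rewrite [b * (c * e)]mulrCA [a * (c * _)]mulrCA [e * b]mulrC.
Qed.

Definition Pd (s : bool) (a1 a2 b1 b2 : 'I_d) : C :=
  dl (if s then a2 else a1) b1 * dl (if s then a1 else a2) b2.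

Definition PQ (s t : bool) (I J : idx) : C :=
  let: (i1, i2, i3, i4) := I in let: (j1, j2, j3, j4) := J in
  Pd s i1 i2 j3 j4 * Pd t j1 j2 i3 i4.

Lemma prod_sum2 (f g : 'I_d -> 'I_d -> C) :
  \sum_a \sum_b \sum_c \sum_e f a b * g c e =
  (\sum_a \sum_b f a b) * (\sum_c \sum_e g c e).
Proof.
under eq_bigr => a _ do under eq_bigr => b _ do
  (under eq_bigr => c _ do rewrite -mulr_sumr; rewrite -mulr_sumr).
under eq_bigr => a _ do rewrite -mulr_suml.
by rewrite -mulr_suml.
Qed.

Lemma prod_sum1 (f g : 'I_d -> C) :
  \sum_a \sum_b f a * g b = (\sum_a f a) * (\sum_b g b).
Proof.
under eq_bigr => a _ do rewrite -mulr_sumr.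
by rewrite -mulr_suml.
Qed.

Lemma sum_one : \sum_(i < d) (1 : C) = d%:R.
Proof. by rewrite sumr_const card_ord. Qed.

Lemma norm_sum {x : 'M[C]_d} (hx : x \is unitarymx) :
  \sum_i \sum_j x i j * (x i j)^* = d%:R.
Proof. by under eq_bigr do rewrite (row_id hx) eqxx; rewrite sum_one. Qed.

Lemma L_sq {x : 'M[C]_d} (hx : x \is unitarymx) :
  \sum_i1 \sum_j1 \sum_i2 \sum_j2
    x i1 j1 * x i2 j2 * (x i1 j1)^* * (x i2 j2)^* = (d ^ 2)%:R.
Proof.
under eq_bigr => i1 _ do under eq_bigr => j1 _ do under eq_bigr => i2 _ do
  under eq_bigr => j2 _ do rewrite -mulrA mulrACA.
by rewrite prod_sum2 norm_sum // natrX expr2.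
Qed.

Lemma sum_eq_sq (a : 'I_d) : \sum_j (j == a)%:R * (a == j)%:R = 1 :> C.
Proof.
rewrite (sum_delta a) ?eqxx ?mulr1 // => j hj.
by rewrite (negbTE hj) mul0r.
Qed.

Lemma L_cross {x : 'M[C]_d} (hx : x \is unitarymx) :
  \sum_i1 \sum_j1 \sum_i2 \sum_j2
    x i1 j1 * x i2 j2 * (x i1 j2)^* * (x i2 j1)^* = d%:R.
Proof.
rewrite exchange_big.
under eq_bigr => j1 _ do under eq_bigr => i1 _ do rewrite exchange_big.
under eq_bigr => j1 _ do rewrite exchange_big.
under eq_bigr => j1 _ do under eq_bigr => j2 _ do under eq_bigr => i1 _ do
  under eq_bigr => i2 _ do rewrite -mulrA mulrACA [x i1 j1 * _]mulrC [x i2 j2 * _]mulrC.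
under eq_bigr => j1 _ do under eq_bigr => j2 _ do rewrite prod_sum1 !(col_id hx).
under eq_bigr => j1 _ do rewrite sum_eq_sq.
exact: sum_one.
Qed.



Definition m_ : C := ((d ^ 2 - 1)%N)%:R.
Definition wg (b : bool) : C := if b then - (d%:R^-1 * m_^-1) else m_^-1.
Definition gg (b : bool) : C := (if b then (d ^ 2)%N else d)%:R.
Arguments wg : simpl never.
Arguments gg : simpl never.
Definition Fm (I J : idx) : C := \sum_(s : bool) \sum_(t : bool) wg (s != t) * PQ s t I J.

Lemma d_neq0 : d%:R != 0 :> C.
Proof. by rewrite pnatr_eq0 -lt0n (leq_trans _ hd). Qed.

Lemma m_neq0 : m_ != 0.
Proof.
rewrite /m_ pnatr_eq0 subn_eq0 -ltnNge.
by rewrite (@leq_trans (2 ^ 2)) // leq_exp2r.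
Qed.

Lemma m_E : m_ = (d ^ 2)%N%:R - 1.
Proof. by rewrite /m_ natrB // expn_gt0 (leq_trans _ hd). Qed.

Lemma wgE1 : wg false * gg true + wg true * gg false = 1.
Proof.
rewrite /wg /gg mulNr [d%:R^-1 * _]mulrC -mulrA mulVf ?d_neq0 // mulr1 -{2}[m_^-1]mulr1 -mulrBr.
by rewrite -m_E mulVf ?m_neq0.
Qed.

Lemma wgE2 : wg true * gg true + wg false * gg false = 0.
Proof.
rewrite /wg /gg mulNr [d%:R^-1 * _]mulrC -mulrA natrX expr2 mulrA.
by rewrite mulrA -(mulrA m_^-1) mulVf ?d_neq0 // mulr1 addNr.
Qed.

Lemma sum_swap2 (A B : finType) (F : idx -> idx -> A -> B -> C) :
  \sum_I \sum_J \sum_(a : A) \sum_(b : B) F I J a b =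
  \sum_(a : A) \sum_(b : B) \sum_I \sum_J F I J a b.
Proof.
have sw1 (G : idx -> idx -> A -> C) :
    \sum_I \sum_J \sum_(a : A) G I J a = \sum_(a : A) \sum_I \sum_J G I J a.
  by under eq_bigr => I _ do rewrite exchange_big; rewrite exchange_big.
rewrite sw1; apply: eq_bigr => a _.
under eq_bigr => I _ do under eq_bigr => J _ do idtac.
have sw2 (G : idx -> idx -> B -> C) :
    \sum_I \sum_J \sum_(b : B) G I J b = \sum_(b : B) \sum_I \sum_J G I J b.
  by under eq_bigr => I _ do rewrite exchange_big; rewrite exchange_big.
exact: sw2.
Qed.

Lemma GF (G : idx -> idx -> C) :
  \sum_I \sum_J G I J * Fm I J =
  \sum_(s : bool) \sum_(t : bool) wg (s != t) * (\sum_I \sum_J G I J * PQ s t I J).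
Proof.
under eq_bigr => I _ do under eq_bigr => J _ do
  (rewrite /Fm mulr_sumr; under eq_bigr => s _ do rewrite mulr_sumr).
rewrite sum_swap2; apply: eq_bigr => s _; apply: eq_bigr => t _.
rewrite mulr_sumr; apply: eq_bigr => I _.
rewrite mulr_sumr; apply: eq_bigr => J _.
by rewrite mulrCA.
Qed.

Lemma contractPQ (G : idx -> idx -> C) s t :
  \sum_I \sum_J G I J * PQ s t I J =
  \sum_i1 \sum_j1 \sum_i2 \sum_j2
    G (i1, i2, if t then j2 else j1, if t then j1 else j2)
      (j1, j2, if s then i2 else i1, if s then i1 else i2).
Proof.
rewrite sum8 /PQ /Pd /=.
under eq_bigr => i1 _ do under eq_bigr => j1 _ do under eq_bigr => i2 _ do
  under eq_bigr => j2 _ do under eq_bigr => i3 _ do under eq_bigr => j3 _ do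
  under eq_bigr => i4 _ do under eq_bigr => j4 _ do rewrite perm4.
under eq_bigr => i1 _ do under eq_bigr => j1 _ do under eq_bigr => i2 _ do
  under eq_bigr => j2 _ do under eq_bigr => i3 _ do under eq_bigr => j3 _ do
  under eq_bigr => i4 _ do rewrite sum_dlr.
under eq_bigr => i1 _ do under eq_bigr => j1 _ do under eq_bigr => i2 _ do
  under eq_bigr => j2 _ do under eq_bigr => i3 _ do under eq_bigr => j3 _ do
  rewrite sum_dlr.
under eq_bigr => i1 _ do under eq_bigr => j1 _ do under eq_bigr => i2 _ do
  under eq_bigr => j2 _ do under eq_bigr => i3 _ do rewrite sum_dlr.
under eq_bigr => i1 _ do under eq_bigr => j1 _ do under eq_bigr => i2 _ do
  under eq_bigr => j2 _ do rewrite sum_dlr.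
by [].
Qed.

Lemma TPQ (x : 'M[C]_d) (hx : x \is unitarymx) s t :
  \sum_I \sum_J tens22 x I J * PQ s t I J = gg (s == t).
Proof.
rewrite contractPQ /= /gg.
case: s; case: t => /=;
  under eq_bigr => i1 _ do under eq_bigr => j1 _ do under eq_bigr => i2 _ do
  under eq_bigr => j2 _ do rewrite !adjE.
- under eq_bigr => i1 _ do under eq_bigr => j1 _ do under eq_bigr => i2 _ do
  under eq_bigr => j2 _ do rewrite -mulrA [_^* * _^*]mulrC mulrA.
  exact: L_sq.
- under eq_bigr => i1 _ do under eq_bigr => j1 _ do under eq_bigr => i2 _ do
  under eq_bigr => j2 _ do rewrite -mulrA [_^* * _^*]mulrC mulrA.
  exact: L_cross.
- exact: L_cross.
- exact: L_sq.
Qed.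

Lemma sum_gg : \sum_(s : bool) \sum_(t : bool) wg (s != t) * gg (s == t) = 2.
Proof.
rewrite !big_bool.
change (wg false * gg true + wg true * gg false + (wg true * gg false + wg false * gg true) = 2).
by rewrite wgE1 [wg true * _ + _]addrC wgE1.
Qed.

Lemma TF (x : 'M[C]_d) (hx : x \is unitarymx) :
  \sum_I \sum_J tens22 x I J * Fm I J = 2.
Proof.
rewrite GF; under eq_bigr => s _ do under eq_bigr => t _ do rewrite TPQ //.
exact: sum_gg.
Qed.

Lemma Pd_self s s' a1 a2 :
  Pd s a1 a2 (if s' then a2 else a1) (if s' then a1 else a2) =
  if s == s' then 1 else dl a1 a2 * dl a2 a1.
Proof.
by case: s; case: s'; rewrite /Pd /= ?dl_refl ?mulr1 // mulrC.
Qed.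

Lemma sum_self b : \sum_a1 \sum_a2 (if b then 1 else dl a1 a2 * dl a2 a1) = gg b.
Proof.
rewrite /gg; case: b => /=.
  by under eq_bigr do rewrite sum_one; rewrite sumr_const card_ord natrX expr2 mulr_natr.
under eq_bigr => a1 _ do under eq_bigr => a2 _ do rewrite mulrC.
by under eq_bigr => a1 _ do rewrite sum_dlr dl_refl; rewrite sum_one.
Qed.

Lemma PQPQ s t s' t' :
  \sum_I \sum_J PQ s t I J * PQ s' t' I J = gg (s == s') * gg (t == t').
Proof.
rewrite contractPQ /PQ.
under eq_bigr => i1 _ do under eq_bigr => j1 _ do under eq_bigr => i2 _ do
  under eq_bigr => j2 _ do rewrite !Pd_self.
under eq_bigr => i1 _ do rewrite exchange_big.
by rewrite prod_sum2 !sum_self.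
Qed.

Lemma PF s t : \sum_I \sum_J PQ s t I J * Fm I J = gg (s == t).
Proof.
rewrite GF; under eq_bigr => s' _ do under eq_bigr => t' _ do rewrite PQPQ.
have tf : (true == false) = false := erefl.
have ft : (false == true) = false := erefl.
have H (a b x y : C) : wg false * (a * x) + wg true * (a * y) +
    (wg true * (b * x) + wg false * (b * y)) =
    a * (wg false * x + wg true * y) + b * (wg true * x + wg false * y).
  by rewrite !mulrDr; congr (_ + _ + (_ + _)); rewrite mulrCA.
have e1 := wgE1; have e2 := wgE2.
have e1' : wg true * gg false + wg false * gg true = 1 by rewrite addrC.
have e2' : wg false * gg false + wg true * gg true = 0 by rewrite addrC.
rewrite !big_bool; case: s; case: t; rewrite /= !eqxx ?tf ?ft /= H.
- by rewrite e1 e2 mulr1 mulr0 addr0.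
- by rewrite e2' e1' mulr1 mulr0 add0r.
- by rewrite e1 e2 mulr1 mulr0 addr0.
- by rewrite e2' e1' mulr1 mulr0 add0r.
Qed.

Lemma FF : \sum_I \sum_J Fm I J * Fm I J = 2.
Proof.
rewrite GF; under eq_bigr => s _ do under eq_bigr => t _ do
  (under eq_bigr => I _ do under eq_bigr => J _ do rewrite mulrC; rewrite PF).
exact: sum_gg.
Qed.



Lemma mul4ACA (a1 a2 a3 a4 b1 b2 b3 b4 : C) :
  a1 * a2 * a3 * a4 * (b1 * b2 * b3 * b4) =
  a1 * b1 * (a2 * b2) * (a3 * b3) * (a4 * b4).
Proof. by rewrite mulrACA [a1 * a2 * a3 * _]mulrACA [a1 * a2 * _]mulrACA. Qed.

Lemma sum2_mull (P : C) (f : 'I_d -> 'I_d -> C) :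
  \sum_a \sum_b P * f a b = P * \sum_a \sum_b f a b.
Proof. by under eq_bigr do rewrite -mulr_sumr; rewrite -mulr_sumr. Qed.

Lemma sum2_mulr (P : C) (f : 'I_d -> 'I_d -> C) :
  \sum_a \sum_b f a b * P = (\sum_a \sum_b f a b) * P.
Proof. by under eq_bigr do rewrite -mulr_suml; rewrite -mulr_suml. Qed.

Lemma prod8 (f1 f2 f3 f4 : 'I_d -> 'I_d -> C) :
  \sum_i1 \sum_j1 \sum_i2 \sum_j2 \sum_i3 \sum_j3 \sum_i4 \sum_j4
    (f1 i1 j1 * f2 i2 j2 * f3 i3 j3 * f4 i4 j4) =
  (\sum_a \sum_b f1 a b) * (\sum_a \sum_b f2 a b) *
  (\sum_a \sum_b f3 a b) * (\sum_a \sum_b f4 a b).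
Proof.
under eq_bigr => i1 _ do under eq_bigr => j1 _ do under eq_bigr => i2 _ do
  under eq_bigr => j2 _ do under eq_bigr => i3 _ do under eq_bigr => j3 _ do
  rewrite sum2_mull.
under eq_bigr => i1 _ do under eq_bigr => j1 _ do under eq_bigr => i2 _ do
  under eq_bigr => j2 _ do rewrite sum2_mulr sum2_mull.
under eq_bigr => i1 _ do under eq_bigr => j1 _ do rewrite sum2_mulr sum2_mulr sum2_mull.
by rewrite sum2_mulr sum2_mulr sum2_mulr.
Qed.

Definition gxy (x y : 'M[C]_d) : C := \sum_i \sum_j x i j * (y i j)^*.

Lemma gxy_tr (x y : 'M[C]_d) : gxy x y = \tr (adjmx y *m x).
Proof.
rewrite /gxy /mxtrace exchange_big; apply: eq_bigr => i _.
rewrite mxE; apply: eq_bigr => k _.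
by rewrite adjE mulrC.
Qed.

Lemma TT (x y : 'M[C]_d) :
  \sum_I \sum_J tens22 x I J * (tens22 y I J)^* =
  (`|\tr (adjmx y *m x)| ^+ 2) ^+ 2.
Proof.
rewrite sum8 /=.
under eq_bigr => i1 _ do under eq_bigr => j1 _ do under eq_bigr => i2 _ do
  under eq_bigr => j2 _ do under eq_bigr => i3 _ do under eq_bigr => j3 _ do
  under eq_bigr => i4 _ do under eq_bigr => j4 _ do
  rewrite !rmorphM /= !adjE !conjCK mul4ACA.
rewrite prod8 -gxy_tr normCK.
have -> : \sum_a \sum_b (x b a)^* * y b a = (gxy x y)^*.
  rewrite /gxy rmorph_sum exchange_big; apply: eq_bigr => i _.
  rewrite rmorph_sum; apply: eq_bigr => j _.
  by rewrite rmorphM /= conjCK.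
by rewrite -/(gxy x y) expr2 mulrACA -mulrA.
Qed.

Variable U : 'I_(d ^ 2 - 1) -> 'I_(d ^ 2) -> 'M[C]_d.
Hypothesis hbasis : forall a, unitary_operator_basis (U a).
Hypothesis hmub : forall a b, a != b -> mutually_unbiased (U a) (U b).
Local Notation X := ('I_(d ^ 2 - 1) * 'I_(d ^ 2))%type.
Definition Ux (p : X) : 'M[C]_d := U p.1 p.2.
Lemma Ux_unitary p : Ux p \is unitarymx.
Proof. exact: (hbasis p.1).1. Qed.

Definition N := (d ^ 2 * (d ^ 2 - 1))%N.
Lemma cardX : #|{: X}| = N.
Proof. by rewrite card_prod !card_ord mulnC. Qed.

Lemma natN (e : nat) : (e.+2 * e.+2 + e.+2 * (e.+2 - 1).-1 = 2 * (e.+2 * (e.+2 - 1)))%N.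
Proof. by rewrite subn1 /= -mulnDr mulnCA mul2n -addnn addSnnS. Qed.

Lemma MS_inner (a : 'I_(d ^ 2 - 1)) (j : 'I_(d ^ 2)) :
  \sum_(q : X) (`|\tr (adjmx (Ux q) *m U a j)| ^+ 2) ^+ 2 = (2 * N)%:R.
Proof.
rewrite sum_pair (bigD1 a) //=.
have -> : \sum_(k < d ^ 2) (`|\tr (adjmx (Ux (a, k)) *m U a j)| ^+ 2) ^+ 2 =
          ((d ^ 2 * d ^ 2)%N)%:R.
  rewrite (bigD1 j) //= big1 ?addr0.
    by rewrite /Ux /= (hbasis a).2 eqxx muln1 normr_nat -!natrX expnS expn1.
  move=> k hk; rewrite /Ux /= (hbasis a).2 (negbTE hk) muln0 normr0.
  by rewrite expr0n /= expr0n.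
have -> : \sum_(b | b != a) \sum_(k < d ^ 2)
            (`|\tr (adjmx (Ux (b, k)) *m U a j)| ^+ 2) ^+ 2 =
          \sum_(b | b != a) ((d ^ 2)%N)%:R.
  apply: eq_bigr => b hb; rewrite /Ux /=.
  under eq_bigr => k _ do rewrite (hmub b a hb) expr1n.
  by rewrite sumr_const card_ord.
rewrite sumr_const (_ : #|_| = (d ^ 2 - 1).-1); last first.
  by rewrite -[in RHS](card_ord (d ^ 2 - 1)) -(cardC1 a).
rewrite -(mulr_natr ((d ^ 2)%:R)) -natrM -natrD; congr (_%:R).
have [e he] : exists e, (d ^ 2 = e.+2)%N.
  exists (d ^ 2 - 2)%N; rewrite -[(_ - 2).+2]addn2 subnK //.
  by rewrite (@leq_trans (2 ^ 2)) // leq_exp2r.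
by rewrite /N he natN.
Qed.

Lemma MS : \sum_(p : X) \sum_(q : X) (`|\tr (adjmx (Ux q) *m Ux p)| ^+ 2) ^+ 2 =
  (2 * N * N)%:R.
Proof.
rewrite (eq_bigr (fun _ => (2 * N)%:R)); last by move=> p _; exact: MS_inner.
by rewrite sumr_const cardX -(mulr_natr ((2 * N)%:R)) -natrM.
Qed.

Lemma sum_swap1 (A : finType) (F : idx -> idx -> A -> C) :
  \sum_I \sum_J \sum_(a : A) F I J a = \sum_(a : A) \sum_I \sum_J F I J a.
Proof. by under eq_bigr => I _ do rewrite exchange_big; rewrite exchange_big. Qed.

Definition Sm (I J : idx) : C := \sum_(p : X) tens22 (Ux p) I J.

Lemma dl_real a b : (dl a b)^* = dl a b.
Proof. exact: conjC_nat. Qed.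

Lemma wg_real b : (wg b)^* = wg b.
Proof.
rewrite /wg /m_; case: b.
  by rewrite rmorphN rmorphM !fmorphV !rmorph_nat.
by rewrite (fmorphV Num.conj) rmorph_nat.
Qed.

Lemma PQ_real s t I J : (PQ s t I J)^* = PQ s t I J.
Proof.
case: I => [[[i1 i2] i3] i4]; case: J => [[[j1 j2] j3] j4].
by rewrite /PQ /Pd /dl !rmorphM !rmorph_nat.
Qed.

Lemma Fm_real I J : (Fm I J)^* = Fm I J.
Proof.
rewrite /Fm rmorph_sum; apply: eq_bigr => s _.
rewrite rmorph_sum; apply: eq_bigr => t _.
by rewrite rmorphM /= wg_real PQ_real.
Qed.

Lemma SS : \sum_I \sum_J Sm I J * (Sm I J)^* = (2 * N * N)%:R.
Proof.
under eq_bigr => I _ do under eq_bigr => J _ do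
  (rewrite /Sm rmorph_sum mulr_suml; under eq_bigr => p _ do rewrite mulr_sumr).
rewrite sum_swap2 -MS; apply: eq_bigr => p _; apply: eq_bigr => q _.
exact: TT.
Qed.

Lemma SF : \sum_I \sum_J Sm I J * Fm I J = (2 * N)%:R.
Proof.
under eq_bigr => I _ do under eq_bigr => J _ do rewrite /Sm mulr_suml.
rewrite sum_swap1 (eq_bigr (fun _ => 2)); last by move=> p _; apply: TF; exact: Ux_unitary.
by rewrite sumr_const cardX -(mulr_natr 2) -natrM mulnC.
Qed.

Lemma FS : \sum_I \sum_J Fm I J * (Sm I J)^* = (2 * N)%:R.
Proof.
rewrite -(conjC_nat _ (2 * N)) -SF rmorph_sum; apply: eq_bigr => I _.
rewrite rmorph_sum; apply: eq_bigr => J _.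
by rewrite rmorphM /= Fm_real mulrC.
Qed.

Lemma expand (a b f : idx -> idx -> C) (n : C) :
  \sum_I \sum_J (a I J - n * f I J) * (b I J - n * f I J) =
  \sum_I \sum_J a I J * b I J - n * \sum_I \sum_J a I J * f I J
  - n * \sum_I \sum_J f I J * b I J + n * n * \sum_I \sum_J f I J * f I J.
Proof.
have H (A B F : C) : (A - n * F) * (B - n * F) =
    A * B - n * (A * F) - n * (F * B) + n * n * (F * F).
  rewrite mulrBl !mulrBr opprB addrA addrAC.
  rewrite [A * (n * F)]mulrCA -[n * F * B]mulrA.
  by rewrite mulrACA.
under eq_bigr => I _ do under eq_bigr => J _ do rewrite H.
under eq_bigr => I _ do rewrite big_split /= !sumrB -!mulr_sumr.
by rewrite big_split /= !sumrB -!mulr_sumr.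
Qed.

Lemma main1 I J : Sm I J = N%:R * Fm I J.
Proof.
set n : C := N%:R.
have H0 : \sum_I \sum_J (Sm I J - n * Fm I J) * (Sm I J - n * Fm I J)^* = 0.
  have -> : \sum_I \sum_J (Sm I J - n * Fm I J) * (Sm I J - n * Fm I J)^* =
            \sum_I \sum_J (Sm I J - n * Fm I J) * ((Sm I J)^* - n * Fm I J).
    apply: eq_bigr => I' _; apply: eq_bigr => J' _.
    by rewrite rmorphB rmorphM /= Fm_real /n conjC_nat.
  rewrite expand SS SF FS FF /n -!natrM.
  by rewrite [(N * (2 * N))%N]mulnCA mulnA subrr sub0r [(N * N * 2)%N]mulnC mulnA addNr.
have H1 : forall I', \sum_J (Sm I' J - n * Fm I' J) * (Sm I' J - n * Fm I' J)^* = 0.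
  have hge : forall I' : idx, true ->
      0 <= \sum_J (Sm I' J - n * Fm I' J) * (Sm I' J - n * Fm I' J)^*.
    by move=> I' _; apply: sumr_ge0 => J' _; rewrite -normCK exprn_ge0.
  by move=> I'; apply: (psumr_eq0P hge H0).
have hge : forall J' : idx, true ->
    0 <= (Sm I J' - n * Fm I J') * (Sm I J' - n * Fm I J')^*.
  by move=> J' _; rewrite -normCK exprn_ge0.
have := psumr_eq0P hge (H1 I) (i:=J) isT.
rewrite -normCK => /eqP; rewrite sqrf_eq0 normr_eq0 subr_eq0 => /eqP.
by [].
Qed.

Variable E : (idx -> idx -> C) -> C.
Hypothesis hE : haar_integral E.

Lemma unit1 : (1%:M : 'M[C]_d) \is unitarymx.
Proof.
apply/unitarymxP; rewrite mul1mx; apply/matrixP => i j.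
by rewrite !mxE eq_sym rmorph_nat.
Qed.

Lemma E_ext (c c' : idx -> idx -> C) :
  (forall V : 'M[C]_d, V \is unitarymx -> polyfun c V = polyfun c' V) -> E c = E c'.
Proof.
move=> H; symmetry; apply: (hE.2.1 1%:M c c' unit1) => V hV.
by rewrite mul1mx H.
Qed.

Lemma E_eqfun (c c' : idx -> idx -> C) : (forall I J, c I J = c' I J) -> E c = E c'.
Proof.
move=> H; apply: E_ext => V _; rewrite /polyfun.
by apply: eq_bigr => I _; apply: eq_bigr => J _; rewrite H.
Qed.

Lemma E0 : E (fun _ _ => 0) = 0.
Proof.
have := hE.1 1 (fun _ _ => 0) (fun _ _ => 0).
rewrite mul1r (@E_eqfun _ (fun _ _ => 0)); last by move=> I J; rewrite ?mulr0 ?mul1r addr0.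
by move=> h; rewrite mul1r in h; apply/(addrI (E (fun _ _ => 0))); rewrite addr0 -h.
Qed.

Lemma E_add (c c' : idx -> idx -> C) : E (fun I J => c I J + c' I J) = E c + E c'.
Proof.
rewrite -[E c]mul1r -(hE.1 1 c c'); apply: E_eqfun => I J; by rewrite mul1r.
Qed.

Lemma E_scale (a : C) (c : idx -> idx -> C) : E (fun I J => a * c I J) = a * E c.
Proof.
rewrite -[RHS]addr0 -E0 -(hE.1 a c (fun _ _ => 0)); apply: E_eqfun => I J.
by rewrite addr0.
Qed.

Lemma E_sum (T : Type) (r : seq T) (f : T -> idx -> idx -> C) :
  E (fun I J => \sum_(k <- r) f k I J) = \sum_(k <- r) E (f k).
Proof.
elim: r => [|k r IH].
  by rewrite big_nil -[X in _ = X]E0; apply: E_eqfun => I J; rewrite big_nil.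
rewrite big_cons -IH -E_add; apply: E_eqfun => I J.
by rewrite big_cons.
Qed.

Lemma sum_deltaT {A : finType} (a : A) (G : A -> C) :
  (forall j, j != a -> G j = 0) -> \sum_j G j = G a.
Proof. by move=> H; rewrite (bigD1 a) //= big1 ?addr0 // => j /H. Qed.

Lemma polyfun_entry K L V : polyfun (@entry_coef C d K L) V = tens22 V K L.
Proof.
rewrite /polyfun (sum_deltaT K) => [|I hI]; last first.
  by apply: big1 => J _; rewrite /entry_coef (negbTE hI) mul0r.
rewrite (sum_deltaT L) => [|J hJ]; last by rewrite /entry_coef (negbTE hJ) andbF mul0r.
by rewrite /entry_coef !eqxx mul1r.
Qed.

Lemma polyfun_comb (A : finType) (w : A -> C) (K L : A -> idx) V :
  polyfun (fun I J => \sum_(k : A) w k * @entry_coef C d (K k) (L k) I J) V =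
  \sum_(k : A) w k * tens22 V (K k) (L k).
Proof.
rewrite /polyfun.
under eq_bigr => I _ do under eq_bigr => J _ do rewrite mulr_suml.
rewrite sum_swap1; apply: eq_bigr => k _.
rewrite -polyfun_entry /polyfun mulr_sumr; apply: eq_bigr => I _.
by rewrite mulr_sumr; apply: eq_bigr => J _; rewrite mulrA.
Qed.

Lemma E_comb (A : finType) (w : A -> C) (K L : A -> idx) :
  E (fun I J => \sum_(k : A) w k * @entry_coef C d (K k) (L k) I J) =
  \sum_(k : A) w k * E (@entry_coef C d (K k) (L k)).
Proof.
rewrite (@E_sum A (index_enum A) (fun k I J => w k * @entry_coef C d (K k) (L k) I J)).
by apply: eq_bigr => k _; rewrite E_scale.
Qed.

Definition mI (I K : idx) : idx :=
  let: (i1, i2, _, _) := I in let: (_, _, k3, k4) := K in (i1, i2, k3, k4).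
Definition mJ (J K : idx) : idx :=
  let: (_, _, j3, j4) := J in let: (k1, k2, _, _) := K in (k1, k2, j3, j4).
Definition kL (I K : idx) : idx :=
  let: (_, _, i3, i4) := I in let: (k1, k2, _, _) := K in (k1, k2, i3, i4).
Definition kR (J K : idx) : idx :=
  let: (j1, j2, _, _) := J in let: (_, _, k3, k4) := K in (j1, j2, k3, k4).

Lemma prod4 (f1 f2 f3 f4 : 'I_d -> C) :
  (\sum_a f1 a) * (\sum_a f2 a) * (\sum_a f3 a) * (\sum_a f4 a) =
  \sum_k1 \sum_k2 \sum_k3 \sum_k4 (f1 k1 * f2 k2 * f3 k3 * f4 k4).
Proof.
symmetry.
under eq_bigr => k1 _ do under eq_bigr => k2 _ do under eq_bigr => k3 _ do
  rewrite -mulr_sumr.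
under eq_bigr => k1 _ do under eq_bigr => k2 _ do rewrite -!mulr_suml -mulr_sumr.
under eq_bigr => k1 _ do rewrite -!mulr_suml -mulr_sumr.
by rewrite -!mulr_suml.
Qed.

Lemma tens22_mul (x V : 'M[C]_d) I J :
  tens22 (x *m V) I J =
  \sum_K tens22 x (mI I K) (mJ J K) * tens22 V (kL I K) (kR J K).
Proof.
case: I => [[[i1 i2] i3] i4]; case: J => [[[j1 j2] j3] j4].
rewrite sum4 /tens22 /= !adjE !mxE rmorph_sum [X in _ * X]rmorph_sum.
rewrite prod4; apply: eq_bigr => k1 _; apply: eq_bigr => k2 _.
apply: eq_bigr => k3 _; apply: eq_bigr => k4 _.
by rewrite !rmorphM mul4ACA !adjE.
Qed.

Lemma H_step (x : 'M[C]_d) (hx : x \is unitarymx) I J :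
  E (@entry_coef C d I J) =
  \sum_K tens22 x (mI I K) (mJ J K) * E (@entry_coef C d (kL I K) (kR J K)).
Proof.
rewrite -E_comb; symmetry.
apply: (hE.2.1 x) => // V hV.
by rewrite polyfun_comb polyfun_entry tens22_mul.
Qed.

Definition PA s (I J : idx) : C :=
  let: (i1, i2, _, _) := I in let: (_, _, j3, j4) := J in Pd s i1 i2 j3 j4.
Definition PB t (I J : idx) : C :=
  let: (_, _, i3, i4) := I in let: (j1, j2, _, _) := J in Pd t j1 j2 i3 i4.

Lemma PQ_AB s t I J : PQ s t I J = PA s I J * PB t I J.
Proof.
by case: I => [[[i1 i2] i3] i4]; case: J => [[[j1 j2] j3] j4].
Qed.

Lemma PQ_mix s t I J K : PQ s t (mI I K) (mJ J K) = PA s I J * PB t K K.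
Proof.
case: I => [[[i1 i2] i3] i4]; case: J => [[[j1 j2] j3] j4].
by case: K => [[[k1 k2] k3] k4].
Qed.

Lemma PB_bool t I J : exists b : bool, PB t I J = b%:R.
Proof.
case: I => [[[i1 i2] i3] i4]; case: J => [[[j1 j2] j3] j4].
by rewrite /PB /Pd /dl -natrM; eexists; rewrite mulnb.
Qed.

Lemma Qconst t I J (V : 'M[C]_d) (hV : V \is unitarymx) :
  polyfun (fun I' J' => \sum_K PB t K K * @entry_coef C d (kL I K) (kR J K) I' J') V =
  PB t I J.
Proof.
rewrite polyfun_comb.
case: I => [[[i1 i2] i3] i4]; case: J => [[[j1 j2] j3] j4].
rewrite sum4 /tens22 /PB /Pd /=.
under eq_bigr => k1 _ do under eq_bigr => k2 _ do under eq_bigr => k3 _ do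
  under eq_bigr => k4 _ do rewrite mulrC mulrA.
under eq_bigr => k1 _ do under eq_bigr => k2 _ do under eq_bigr => k3 _ do
  rewrite sum_dlr.
under eq_bigr => k1 _ do under eq_bigr => k2 _ do rewrite sum_dlr.
case: t => /=; under eq_bigr => k1 _ do under eq_bigr => k2 _ do rewrite !adjE.
- under eq_bigr => k1 _ do under eq_bigr => k2 _ do
    rewrite -mulrA [_^* * _^*]mulrC mulrACA [V k1 j1 * _]mulrC [V k2 j2 * _]mulrC.
  by rewrite prod_sum1 !(col_id hV) /dl mulrC (eq_sym i3) (eq_sym i4).
- under eq_bigr => k1 _ do under eq_bigr => k2 _ do
    rewrite -mulrA mulrACA [V k1 j1 * _]mulrC [V k2 j2 * _]mulrC.
  by rewrite prod_sum1 !(col_id hV) /dl (eq_sym i3) (eq_sym i4).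
Qed.

Lemma E_const (c : idx -> idx -> C) (b : bool) :
  (forall V : 'M[C]_d, V \is unitarymx -> polyfun c V = b%:R) -> E c = b%:R.
Proof.
case: b => H; first exact: (hE.2.2 c H).
have -> : (false%:R : C) = 0 by []. rewrite -E0; apply: E_ext => V hV; rewrite (H V hV) /polyfun.
by rewrite big1 // => I _; rewrite big1 // => J _; rewrite mul0r.
Qed.

Lemma EQ t I J :
  \sum_K PB t K K * E (@entry_coef C d (kL I K) (kR J K)) = PB t I J.
Proof.
rewrite -E_comb; have [b hb] := PB_bool t I J.
by rewrite hb; apply: E_const => V hV; rewrite Qconst.
Qed.

Lemma N_neq0 : N%:R != 0 :> C.
Proof.
rewrite /N natrM mulf_neq0 //; last exact: m_neq0.
by rewrite natrX expf_neq0 // d_neq0.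
Qed.

Lemma main2 I J : E (@entry_coef C d I J) = Fm I J.
Proof.
set H := fun K => E (@entry_coef C d (kL I K) (kR J K)).
have h1 : N%:R * E (@entry_coef C d I J) =
          N%:R * \sum_K Fm (mI I K) (mJ J K) * H K.
  have e1 : \sum_(p : X) E (@entry_coef C d I J) = N%:R * E (@entry_coef C d I J).
    by rewrite sumr_const cardX mulr_natl.
  have e2 : \sum_(p : X) E (@entry_coef C d I J) =
      \sum_(p : X) \sum_K tens22 (Ux p) (mI I K) (mJ J K) * H K.
    by apply: eq_bigr => p _; exact: (@H_step (Ux p) (Ux_unitary p) I J).
  rewrite -e1 e2 exchange_big mulr_sumr; apply: eq_bigr => K _.
  by rewrite -mulr_suml -/(Sm _ _) main1 mulrA.
have {h1} h2 := mulfI N_neq0 h1; rewrite h2.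
under eq_bigr => K _ do (rewrite /Fm mulr_suml; under eq_bigr => s _ do rewrite mulr_suml).
rewrite exchange_big; apply: eq_bigr => s _.
rewrite exchange_big; apply: eq_bigr => t _.
under eq_bigr => K _ do rewrite PQ_mix -mulrA -mulrA.
by rewrite -mulr_sumr -mulr_sumr /H EQ PQ_AB mulrA.
Qed.

Lemma final I J :
  ((d ^ 2 * (d ^ 2 - 1))%:R)^-1 *
    (\sum_(a < d ^ 2 - 1) \sum_(j < d ^ 2) tens22 (U a j) I J)
  = E (@entry_coef C d I J).
Proof.
rewrite main2 -(@sum_pair _ _ (fun p : X => tens22 (Ux p) I J)) -/(Sm I J) main1.
by rewrite mulrA mulVf ?mul1r //; exact: N_neq0.
Qed.
End S.

Theorem mainTheorem9 (C : numClosedFieldType) (d : nat) (hd : (2 <= d)%N)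
    (U : 'I_(d ^ 2 - 1) -> 'I_(d ^ 2) -> 'M[C]_d)
    (hbasis : forall a, unitary_operator_basis (U a))
    (hmub : forall a b, a != b -> mutually_unbiased (U a) (U b))
    (E : (idx4 d -> idx4 d -> C) -> C) (hE : haar_integral E) :
  forall I J : idx4 d,
    ((d ^ 2 * (d ^ 2 - 1))%:R)^-1 *
      (\sum_(a < d ^ 2 - 1) \sum_(j < d ^ 2) tens22 (U a j) I J)
    = E (@entry_coef C d I J).
Proof. exact: (@final C d hd U hbasis hmub E hE). Qed.
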